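(* Let $q$ be a power of $2$ and $f(X)=X(X^{q-1}-c)^{q+1}$ on $\mathbb{F}_{q^2}$, with $a,\beta,g,L_{[u:v]},\mathbb{P}^1$ as in the context. If $c\in\mathbb{F}_q\setminus\{0,1\}$, then $\mathcal{G}(f)$ is isomorphic to \[ \mathcal{C}_1\oplus\bigoplus_{L_{[u:v]}\in\mathbb{P}^1}\frac{q-1}{\operatorname{ord}(g(u,v))}\times\mathcal{C}_{\operatorname{ord}(g(u,v))}. \] If $c=1$, then $\mathcal{G}(f)$ is isomorphic to \[ (\mathcal{C}_1,\mathcal{T}_{q-1})\oplus\bigoplus_{L_{[u:v]}\in\mathbb{P}^1\setminus\{L_{[1:0]}\}}\frac{q-1}{\operatorname{ord}(g(u,v))}\times\mathcal{C}_{\operatorname{ord}(g(u,v))}. \]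
   Context: $a\in\mathbb{F}_q$ with $\operatorname{Tr}(a)=1$ (absolute trace to $\mathbb{F}_2$), $\beta\in\mathbb{F}_{q^2}$ with $\beta^2+\beta+a=0$; every element of $\mathbb{F}_{q^2}$ is uniquely $x+y\beta$, $x,y\in\mathbb{F}_q$. For $(x,y)\neq(0,0)$, $g(x,y)=c^2+1+\frac{cy^2}{x^2+xy+y^2a}\in\mathbb{F}_q$, invariant under scaling by $\mathbb{F}_q^*$. For $(u,v)\neq(0,0)$, $L_{[u:v]}=\{\lambda(u+v\beta):\lambda\in\mathbb{F}_q\}$, $\mathbb{P}^1$ is the set of these $q+1$ lines, and $\operatorname{ord}$ is multiplicative order in $\mathbb{F}_q^*$. $\mathcal{G}(f)$ is the functional graph (vertices $\mathbb{F}_{q^2}$, edges $\langle x,f(x)\rangle$). Graph notation: $\mathcal{C}_n$ is an oriented cycle of length $n$; $\mathcal{T}_m$ is the directed tree with $m+1$ vertices $P_1,\dots,P_{m+1}$ and edges $P_i\to P_{m+1}$ for $1\le i\le m$; $(\mathcal{C}_n,\mathcal{T}_m)$ is the graph obtained by replacing each vertex of $\mathcal{C}_n$ by a copy of $\mathcal{T}_m$ (identifying the cycle vertex with the root $P_{m+1}$); $\mathcal{G}\oplus\mathcal{H}$ is disjoint union; $k\times\mathcal{H}$ is the disjoint union of $k$ copies of $\mathcal{H}$. *)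

(* Defs.v *)
From HB Require Import structures.
From mathcomp Require Import all_boot all_order all_algebra all_field.
Set Implicit Arguments. Unset Strict Implicit. Unset Printing Implicit Defensive.
Import GRing.Theory.
Local Open Scope ring_scope.

(* A component descriptor (n, m) stands for the graph (C_n, T_m):
   vertices (i, j) with i < n, j <= m; the root of the i-th tree is (i, m);
   leaves (i, j), j < m, point to (i, m); roots form the oriented cycle
   (i, m) -> ((i+1) mod n, m).  C_n itself is (C_n, T_0).
   A list s of descriptors stands for the disjoint union of its components;
   vertices are triples (k, i, j) with k < size s. *)
Definition comp_vert (s : seq (nat * nat)) (v : nat * nat * nat) : bool :=
  let: (k, i, j) := v in
  [&& (k < size s)%N, (i < (nth (1, 0) s k).1)%N & (j <= (nth (1, 0) s k).2)%N].

Definition comp_next (s : seq (nat * nat)) (v : nat * nat * nat) : nat * nat * nat :=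
  let: (k, i, j) := v in
  let: (n, m) := nth (1%N, 0%N) s k in
  if (j < m)%N then (k, i, m) else (k, (i.+1 %% n)%N, m).

Definition fgraph_iso (T : finType) (f : T -> T) (s : seq (nat * nat)) : Prop :=
  exists phi : T -> nat * nat * nat,
    [/\ injective phi,
        forall x, comp_vert s (phi x),
        forall v, comp_vert s v -> exists x, phi x = v
      & forall x y, (y == f x) = (phi y == comp_next s (phi x))].

Definition copies_cycle (k n : nat) : seq (nat * nat) := nseq k (n, 0%N).

Section FieldDefs.
Variable L : finFieldType.

Definition subFq (q : nat) : pred L := fun x => x ^+ q == x.

Definition absTr (k : nat) (a : L) : L := \sum_(i < k) a ^+ (2 ^ i).

Definition gfun (a c x y : L) : L :=
  c ^+ 2 + 1 + c * y ^+ 2 / (x ^+ 2 + x * y + y ^+ 2 * a).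

Definition mord (x : L) : nat := fingraph.order (fun y : L => x * y) 1.

Definition lineset (q : nat) (beta u v : L) : pred L :=
  fun z => [exists lam : L, (lam \in subFq q) && (z == lam * (u + v * beta))].

Definition P1_reps (q : nat) (beta : L) (reps : seq (L * L)) : Prop :=
  (forall r, r \in reps -> [/\ r.1 \in subFq q, r.2 \in subFq q & r != (0, 0)])
  /\ (forall z : L, z != 0 -> count (fun r => lineset q beta r.1 r.2 z) reps = 1%N).

End FieldDefs.

(* Main.v *)
Require Import Defs.
From HB Require Import structures.
From mathcomp Require Import all_boot all_order all_algebra all_field.
From mathcomp Require Import all_fingroup all_solvable.
From mathcomp Require Import zify ring.
Set Implicit Arguments. Unset Strict Implicit. Unset Printing Implicit Defensive.
Import GRing.Theory FinRing.Theory.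
Local Open Scope ring_scope.
Local Open Scope group_scope.
Local Open Scope ring_scope.

Section Comb.
Variables (T : finType) (f : T -> T).

Definition iso_on (D : pred T) (s : seq (nat * nat)) : Prop :=
  exists phi : T -> nat * nat * nat,
    [/\ {in D &, injective phi},
        forall x, x \in D -> comp_vert s (phi x),
        forall v, comp_vert s v -> exists2 x, x \in D & phi x = v,
        forall x, x \in D -> f x \in D
      & forall x, x \in D -> phi (f x) = comp_next s (phi x)].

Lemma iso_on_eq D1 D2 s : D1 =i D2 -> iso_on D1 s -> iso_on D2 s.
Proof.
move=> E [phi [inj cv sur cl nx]]; exists phi; split.
- by move=> x y; rewrite -!E; apply: inj.
- by move=> x; rewrite -E; apply: cv.
- by move=> v /sur [x]; rewrite E => ??; exists x.
- by move=> x; rewrite -!E; apply: cl.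
- by move=> x; rewrite -E; apply: nx.
Qed.

Lemma iso_on_fgraph s : iso_on predT s -> fgraph_iso f s.
Proof.
move=> [phi [inj cv sur cl nx]]; exists phi; split.
- by move=> x y; apply: inj.
- by move=> x; apply: cv.
- by move=> v /sur [x _ <-]; exists x.
- move=> x y; rewrite -nx //; apply/eqP/eqP => [->//|]; exact: inj.
Qed.

Definition shift (n : nat) (v : nat * nat * nat) : nat * nat * nat :=
  let: (k, i, j) := v in ((k + n)%N, i, j).

Lemma comp_vert_cat s1 s2 v :
  comp_vert (s1 ++ s2) v =
  if (v.1.1 < size s1)%N then comp_vert s1 v
  else comp_vert s2 ((v.1.1 - size s1)%N, v.1.2, v.2).
Proof.
case: v => [[k i] j] /=; rewrite size_cat nth_cat.
case: ifP => h; first by rewrite (leq_trans h) // leq_addr.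
have h' : (size s1 <= k)%N by rewrite leqNgt h.
by congr (_ && _); apply/idP/idP => H; lia.
Qed.

Lemma comp_next_cat s1 s2 v :
  comp_next (s1 ++ s2) v =
  if (v.1.1 < size s1)%N then comp_next s1 v
  else shift (size s1) (comp_next s2 ((v.1.1 - size s1)%N, v.1.2, v.2)).
Proof.
case: v => [[k i] j] /=; rewrite nth_cat.
case: ifP => h //.
case: (nth _ s2 _) => n m /=; case: ifP => _ /=; by rewrite subnK // leqNgt h.
Qed.

Lemma comp_vert_nil v : comp_vert [::] v = false.
Proof. by case: v => [[k i] j]. Qed.

Lemma iso_on_nil : iso_on pred0 [::].
Proof.
exists (fun _ => (0, 0, 0)%N); split => //.
by move=> v; rewrite comp_vert_nil.
Qed.

Lemma iso_on_cat D1 D2 s1 s2 :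
  (forall x, x \in D1 -> x \in D2 -> False) ->
  iso_on D1 s1 -> iso_on D2 s2 -> iso_on [predU D1 & D2] (s1 ++ s2).
Proof.
move=> dis [p1 [i1 c1 s1s cl1 n1]] [p2 [i2 c2 s2s cl2 n2]].
have k1 x : x \in D1 -> ((p1 x).1.1 < size s1)%N.
  move=> /c1; case: (p1 x) => [[k i] j] /=; by case/and3P.
exists (fun x => if x \in D1 then p1 x else shift (size s1) (p2 x)); split.
- move=> x y; rewrite !inE.
  have sh x' : x' \in D2 -> ~~ ((shift (size s1) (p2 x')).1.1 < size s1)%N.
    by move=> _; case: (p2 x') => [[k i] j] /=; rewrite -leqNgt leq_addl.
  case: ifP => hx; case: ifP => hy.
  + by move=> _ _; apply: i1.
  + move=> _ /orP [] hy'; first by rewrite hy' in hy.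
    by move=> e; move: (k1 _ hx) (sh _ hy'); rewrite e => ->.
  + move=> /orP [] hx'; first by rewrite hx' in hx.
    by move=> _ e; move: (k1 _ hy) (sh _ hx'); rewrite -e => ->.
  + move=> /orP [] hx'; first by rewrite hx' in hx.
    move=> /orP [] hy'; first by rewrite hy' in hy.
    move=> e; apply: i2 => //; move: e; case: (p2 x) => [[??]?]; case: (p2 y) => [[??]?] /=.
    by case => /addIn -> -> ->.
- move=> x; rewrite !inE; case: ifP => hx /=.
  + by move=> _; rewrite comp_vert_cat k1 //; apply: c1.
  + move=> hx2.
    rewrite comp_vert_cat; move: (c2 _ hx2); case: (p2 x) => [[k i] j] /=; have -> : (k + size s1 < size s1)%N = false by rewrite ltnNge leq_addl.
    by rewrite addnK.

- move=> [[k i] j]; rewrite comp_vert_cat; case: ifP => /= hk.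
  + move=> h; have /s1s [x hx e] : comp_vert s1 (k, i, j) by []; exists x; first by rewrite inE hx.
    by rewrite hx.
  + move=> h; have /s2s [x hx e] : comp_vert s2 ((k - size s1)%N, i, j) by []; exists x; first by rewrite inE hx orbT.
    case: ifP => h1; first by case: (dis _ h1 hx).
    by rewrite e /= subnK // leqNgt hk.
- by move=> x; rewrite !inE => /orP [/cl1 -> | /cl2 ->]; rewrite ?orbT.
- move=> x; rewrite !inE => hxU; case: (boolP (x \in D1)) => hx.
  + by rewrite (cl1 x hx) n1 // comp_next_cat k1.
  + have hx2 : x \in D2 by move: hxU; rewrite (negbTE hx).
    have hf2 := cl2 _ hx2.
    case: ifP => h; first by case: (dis _ h hf2).
    rewrite n2 // comp_next_cat; case: (p2 x) => [[k i] j] /=.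
    have -> : (k + size s1 < size s1)%N = false by rewrite ltnNge leq_addl.
    by rewrite addnK.
Qed.

Lemma iso_on_flatten (I : eqType) (D : I -> pred T) (s : I -> seq (nat * nat)) (xs : seq I) :
  (forall i, i \in xs -> iso_on (D i) (s i)) ->
  (forall x, (count (fun i => x \in D i) xs <= 1)%N) ->
  iso_on [pred x | has (fun i => x \in D i) xs] (flatten (map s xs)).
Proof.
elim: xs => [|i xs IH] H C /=.
  by apply: iso_on_eq iso_on_nil => x; rewrite !inE.
have H1 : iso_on (D i) (s i) by apply: H; rewrite inE eqxx.
have H2 : iso_on [pred x | has (fun i => x \in D i) xs] (flatten (map s xs)).
  apply: IH => [j hj|x]; first by apply: H; rewrite inE hj orbT.
  by have := C x => /=; case: (x \in D i) => //= h; apply: leq_trans h.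
apply: iso_on_eq (iso_on_cat _ H1 H2) => [x|x h1]; first by rewrite !inE.
rewrite inE has_count => h2; have := C x => /=.
by rewrite h1 /=; lia.
Qed.

Lemma iter_closed (D : pred T) n x :
  (forall y, y \in D -> f y \in D) -> x \in D -> iter n f x \in D.
Proof. by move=> cl hx; elim: n => //= n IH; apply: cl. Qed.

Lemma iso_on_cycle x d : (0 < d)%N -> iter d f x = x -> uniq (traject f x d) ->
  iso_on [pred y | y \in traject f x d] [:: (d, 0%N)].
Proof.
move=> d0 hd hu.
exists (fun y => (0%N, index y (traject f x d), 0%N)); split.
- move=> y1 y2; rewrite !inE => h1 h2 [] e.
  by rewrite -(nth_index x h1) -(nth_index x h2) e.
- by move=> y; rewrite inE /= -index_mem size_traject => ->.
- move=> [[k i] j] /=; rewrite ltnS leqn0 => /and3P [/eqP -> hi].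
  rewrite /= leqn0 => /eqP ->; exists (iter i f x).
    by rewrite inE -(nth_traject _ hi); apply: mem_nth; rewrite size_traject.
  by rewrite -(nth_traject _ hi) index_uniq // size_traject.
- move=> y; rewrite inE => /trajectP [i hi ->]; rewrite inE.
  apply/trajectP; case: (ltnP i.+1 d) => h; first by exists i.+1.
  exists 0%N => //; have e : i.+1 = d by apply/eqP; rewrite eqn_leq h hi.
  by rewrite /= -iterS e hd.
- move=> y; rewrite inE => /trajectP [i hi ->] /=.
  rewrite -(nth_traject _ hi) index_uniq ?size_traject // nth_traject //.
  case: (ltnP i.+1 d) => h.
    by rewrite -iterS -(nth_traject _ h) index_uniq ?size_traject // modn_small.
  have e : i.+1 = d by apply/eqP; rewrite eqn_leq h hi.
  rewrite -iterS.
  by rewrite e hd modnn; case: d {hd hu h hi e} d0 => //= d' _; rewrite eqxx.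
Qed.

Lemma iso_on_cycles (D : pred T) d : (0 < d)%N ->
  (forall x, x \in D -> f x \in D) -> (forall x, x \in D -> iter d f x = x) ->
  (forall x i, x \in D -> (0 < i < d)%N -> iter i f x != x) ->
  (d %| #|D|)%N /\ iso_on D (nseq (#|D| %/ d) (d, 0%N)).
Proof.
move=> d0; have [n] := ubnP #|D|; elim: n D => // n IH D hn cl hd hp.
case: (pickP D) => [x hx|D0].
2:{ have c0 : #|D| = 0%N by apply: eq_card0.
    rewrite c0 div0n dvdn0; split => //.
    by apply: iso_on_eq iso_on_nil => y; rewrite !inE; move: (D0 y); rewrite unfold_in => ->. }
pose O := [pred y | y \in traject f x d].
have hu : uniq (traject f x d).
  apply/(uniqP x) => i j; rewrite !inE size_traject => hi hj.
  rewrite !nth_traject //.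
  wlog lij : i j hi hj / (i <= j)%N.
    move=> W; case: (leqP i j) => h; first exact: W.
    by move=> e; apply/esym/W => //; apply: ltnW.
  move=> e; apply/eqP; rewrite eqn_leq lij leqNgt; apply/negP => lt.
  have := hp (iter i f x) (j - i)%N (iter_closed i cl hx).
  rewrite subn_gt0 lt -iterD subnK ?(ltnW lt) // -e eqxx => /=.
  by move/(_ (leq_ltn_trans (leq_subr _ _) hj)).
have OD : {subset O <= D} by move=> y /trajectP [i _ ->]; apply: iter_closed.
have clO : forall y, y \in O -> f y \in O.
  move=> y /trajectP [i hi ->]; apply/trajectP.
  case: (ltnP i.+1 d) => h; first by exists i.+1.
  exists 0%N => //; have e : i.+1 = d by apply/eqP; rewrite eqn_leq h hi.
  by rewrite /= -iterS e hd.
have iterO : forall m y, y \in O -> iter m f y \in O.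
  by move=> m y hy; elim: m => //= m IHm; apply: clO.
pose D' := [pred y | (y \in D) && (y \notin O)].
have cO : #|O| = d by rewrite (card_uniqP hu) size_traject.
have cD : #|D| = (d + #|D'|)%N.
  rewrite -(cardID O D) -cO; congr (_ + _)%N; apply: eq_card => y; rewrite !inE.
    by apply/andP/idP => [[]|h] //; split => //; apply: OD.
  by rewrite andbC.
have hn' : (#|D'| < n)%N by move: hn; rewrite cD; lia.
have cl' : forall y, y \in D' -> f y \in D'.
  move=> y; rewrite !inE => /andP [yD yO]; rewrite cl //=; apply/negP => fO.
  have : iter d.-1 f (f y) \in O by apply: iterO.
  by rewrite -iterSr prednK // hd // (negbTE yO).
have [dv iso'] : (d %| #|D'|)%N /\ iso_on D' (nseq (#|D'| %/ d) (d, 0%N)).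
  apply: IH => //.
  - by move=> y; rewrite inE => /andP [yD _]; apply: hd.
  - by move=> y i; rewrite inE => /andP [yD _]; apply: hp.
have isoO := iso_on_cycle d0 (hd _ hx) hu.
have dd : (d %| #|D|)%N by rewrite cD dvdn_add.
split => //.
have -> : (#|D| %/ d)%N = (#|D'| %/ d).+1.
  by rewrite cD divnDl ?dvdnn // divnn d0 add1n.
apply: iso_on_eq (iso_on_cat _ isoO iso') => [y|y h1]; last first.
  by rewrite inE => /andP [_ /negP]; apply.
rewrite !inE; case: (boolP (y \in O)) => hy /=; last by rewrite andbT.
by rewrite (OD _ hy).
Qed.


Lemma iso_on_tree (D : pred T) z m : z \in D -> (forall y, y \in D -> f y = z) ->
  #|D| = m.+1 -> iso_on D [:: (1%N, m)].
Proof.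
move=> zD fz cD.
pose E := enum [predD1 D & z].
have cE : size E = m by rewrite -cardE; move: cD; rewrite (cardD1 z) zD add1n => [[]].
exists (fun y => if y == z then (0%N, 0%N, m) else (0%N, 0%N, index y E)); split.
- move=> y1 y2 h1 h2; case: eqP => e1; case: eqP => e2; rewrite ?e1 ?e2 //.
  + case=> e; have : y2 \in E by rewrite mem_enum !inE h2 andbT; apply/eqP.
    by rewrite -index_mem cE e ltnn.
  + case=> e; have : y1 \in E by rewrite mem_enum !inE h1 andbT; apply/eqP.
    by rewrite -index_mem cE -e ltnn.
  + case=> e; have hy1 : y1 \in E by rewrite mem_enum !inE h1 andbT; apply/eqP.
    by rewrite -(nth_index z hy1) e nth_index // mem_enum !inE h2 andbT; apply/eqP.
- move=> y hy; case: eqP => e //=; rewrite ltnW // -cE index_mem mem_enum !inE hy andbT.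
  by apply/eqP.
- move=> [[k i] j] /and3P [hk hi hj]; move: hk; rewrite ltnS leqn0 => /eqP ek; subst k.
  move: hi hj => /=; rewrite ltnS leqn0 => /eqP -> hj.
  case: (ltnP j m) => hjm.
    have hE : nth z E j \in E by rewrite mem_nth // cE.
    move: (hE); rewrite mem_enum !inE => /andP [nz hD].
    exists (nth z E j) => //.
    by rewrite (negbTE nz) index_uniq ?enum_uniq // cE.
  exists z => //; rewrite eqxx; congr (_, _, _); apply/eqP; by rewrite eqn_leq hj hjm.
- by move=> y /fz ->.
- move=> y hy; rewrite (fz _ hy) eqxx /=; case: eqP => e /=; first by rewrite ltnn.
  have -> : (index y E < m)%N by rewrite -cE index_mem mem_enum !inE hy andbT; apply/eqP.
  by [].
Qed.

End Comb.

Section Fld.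
Variables (L : finFieldType) (k : nat) (hk : (0 < k)%N) (hcard : #|L| = ((2 ^ k) ^ 2)%N).
Local Notation q := (2 ^ k)%N.
Local Notation Fq := (@subFq L (2 ^ k)).

Lemma ch2 : (2%N \in [pchar L]).
Proof. by apply: (card_finPcharP (n := (k * 2)%N)); rewrite // hcard expnM. Qed.

Lemma sq_add (x y : L) : (x + y) ^+ 2 = x ^+ 2 + y ^+ 2.
Proof. by rewrite sqrrD mulr2n (addrr_pchar2 ch2) addr0. Qed.

Lemma pow2_add i (x y : L) : (x + y) ^+ (2 ^ i) = x ^+ (2 ^ i) + y ^+ (2 ^ i).
Proof. by elim: i => [|i IH]; rewrite ?expn0 ?expr1 // expnSr !exprM IH sq_add. Qed.

Lemma frobD (x y : L) : (x + y) ^+ q = x ^+ q + y ^+ q.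
Proof. exact: pow2_add. Qed.

Lemma sq_sum (I : Type) (r : seq I) (F : I -> L) : (\sum_(i <- r) F i) ^+ 2 = \sum_(i <- r) F i ^+ 2.
Proof.
exact: (rmorph_sum (pFrobenius_aut ch2) r xpredT F).
Qed.

Lemma hqq (x : L) : x ^+ (q * q) = x.
Proof. by rewrite -[(q * q)%N]/(q ^ 2)%N -hcard expf_card. Qed.

Lemma q_gt1 : (1 < q)%N.
Proof. by rewrite -{1}(expn0 2) ltn_exp2l. Qed.

Lemma oppL (x : L) : - x = x.
Proof. by apply: oppr_pchar2; apply: ch2. Qed.



Lemma Fq_unit (x : L) : x ^+ q = x -> x != 0 -> x ^+ (q - 1) = 1.
Proof.
move=> hx nz; apply: (mulIf nz); rewrite mul1r -exprSr.
by rewrite subn1 prednK ?hx // expn_gt0.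
Qed.

Lemma beta_pow (a beta : L) : beta ^+ 2 + beta + a = 0 ->
  forall i, beta ^+ (2 ^ i) = beta + \sum_(j < i) a ^+ (2 ^ j).
Proof.
move=> hb; elim => [|i IH]; first by rewrite expn0 expr1 big_ord0 addr0.
rewrite expnSr exprM IH sq_add sq_sum big_ord_recl expn0 expr1.
have -> : beta ^+ 2 = beta + a.
  by rewrite -[beta ^+ 2](addrK (beta + a)) addrA hb sub0r oppL.
rewrite addrA; congr (_ + _); apply: eq_bigr => j _.
by rewrite -exprM -expnSr.
Qed.

Lemma card_Fq_le : (#|Fq| <= q)%N.
Proof.
pose p : {poly L} := 'X^q - 'X.
have sp : size p = q.+1.
  rewrite /p size_polyDl ?size_polyXn // size_polyN size_polyX ltnS; exact: q_gt1.
have pn0 : p != 0 by rewrite -size_poly_eq0 sp.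
have := @max_poly_roots _ p (enum (Fq)) pn0.
rewrite sp ltnS cardE; apply => //; last exact: enum_uniq.
apply/allP => x; rewrite mem_enum /root /p !hornerE => /eqP ->.
by rewrite subrr.
Qed.

Lemma card_Fq_ge : (q <= #|Fq|)%N.
Proof.
have /cyclicP [u hu] := field_unit_group_cyclic [set: {unit L}]%G.
have ou : #[u] = (q * q).-1.
  by rewrite /order -hu card_finField_unit hcard.
pose h (i : 'I_(q - 1)) : L := val (u ^+ ((q + 1) * i))%g.
have hinj : injective h.
  move=> i j /val_inj /eqP; rewrite eq_expg_mod_order ou => /eqP e.
  apply/val_inj => /=; apply/eqP.
  have lt (m : 'I_(q - 1)) : ((q + 1) * m < (q * q).-1)%N.
    have := ltn_ord m; have := q_gt1; nia.
  rewrite !modn_small ?lt // in e.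
  by rewrite -(eqn_pmul2l (_ : 0 < q + 1)%N) ?e ?addn1.
have sub : [set h i | i in 'I_(q - 1)] \subset [set x in Fq | x != 0].
  apply/subsetP => _ /imsetP [i _ ->]; rewrite inE.
  apply/andP; split; last by rewrite /h -unitfE (valP (u ^+ _)%g).
  have h1 : h i ^+ (q - 1) = 1.
    rewrite /h -val_unitX -expgM.
    have -> : ((q + 1) * i * (q - 1))%N = (#[u] * i)%N.
      by rewrite ou; have := q_gt1; nia.
    by rewrite expgM expg_order expg1n.
  rewrite /subFq unfold_in -{1}(subnK (ltnW q_gt1)) exprD h1 mul1r expr1.
  by [].
have := subset_leq_card sub; rewrite card_imset // card_ord.
have c1 : #|[set x in Fq | x != 0]| = #|[predD1 Fq & 0]|.
  by apply: eq_card => x; rewrite !inE andbC.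
have z0 : (0 : L) \in Fq by rewrite /subFq unfold_in expr0n expn_eq0 /=.
rewrite c1 (cardD1 0 Fq) z0 add1n => hh; rewrite -[X in (X <= _)%N](subnK (ltnW q_gt1)) addn1 ltnS.
exact: hh.
Qed.

Lemma card_Fq : #|Fq| = q.
Proof. by apply/eqP; rewrite eqn_leq card_Fq_le card_Fq_ge. Qed.

Lemma card_Fq0 : #|[pred x | (x \in Fq) && (x != 0)]| = (q - 1)%N.
Proof.
have z0 : (0 : L) \in Fq by rewrite /subFq unfold_in expr0n expn_eq0 /=.
have e := cardD1 0 Fq; rewrite z0 card_Fq add1n in e.
transitivity #|[predD1 Fq & 0]|; last by move: #|[predD1 Fq & 0]| e => m e; lia.
by apply: eq_card => x; rewrite !inE andbC.
Qed.

Definition Gm (c y : L) := (y ^+ (q - 1) - c) ^+ (q + 1).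

Lemma pow_qm1 (y : L) : y ^+ q = y ^+ (q - 1) * y.
Proof. by rewrite -exprSr subn1 prednK // expn_gt0. Qed.

Lemma Gm_Fq c y : Gm c y ^+ q = Gm c y.
Proof.
rewrite /Gm -exprM mulnDl mul1n exprD hqq addnC exprD expr1 mulrC.
by [].
Qed.

Lemma Gm_scale c y l : l ^+ q = l -> l != 0 -> Gm c (l * y) = Gm c y.
Proof. by move=> hl nz; rewrite /Gm exprMn (Fq_unit hl nz) mul1r. Qed.

Lemma Gm_eq0 c y : c ^+ q = c -> y != 0 -> Gm c y = 0 -> c = 1 /\ y ^+ q = y.
Proof.
move=> hc nz /eqP; rewrite /Gm expf_eq0 addn1 /= subr_eq0 => /eqP hy.
have hc2 : c ^+ 2 = 1.
  have : y ^+ ((q - 1) * (q + 1)) = 1.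
    have -> : ((q - 1) * (q + 1) = (q * q).-1)%N by have := q_gt1; nia.
    apply: (mulIf nz); rewrite mul1r -exprSr prednK ?hqq // muln_gt0 expn_gt0.
    by [].
  by rewrite exprM hy exprD hc expr1 -expr2.
have c1 : c = 1.
  apply/eqP; rewrite -subr_eq0.
  have : (c - 1) ^+ 2 == 0 by rewrite oppL sq_add hc2 expr1n (addrr_pchar2 ch2).
  by rewrite expf_eq0.
by split => //; rewrite pow_qm1 hy c1 mul1r.
Qed.

Lemma two_kill (x : L) : x *+ 2 = 0.
Proof. by rewrite mulr2n (addrr_pchar2 ch2). Qed.

Lemma Gm_gfun (a beta c u v : L) : beta ^+ 2 + beta + a = 0 -> beta ^+ q = beta + 1 ->
  u ^+ q = u -> v ^+ q = v -> c ^+ q = c -> u + v * beta != 0 ->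
  Gm c (u + v * beta) = gfun a c u v.
Proof.
move=> hb hbq hu hv hc nz.
set z := u + v * beta.
have ha : a = beta ^+ 2 + beta.
  have -> : a = a - (beta ^+ 2 + beta + a) by rewrite hb subr0.
  have -> : a - (beta ^+ 2 + beta + a) = - (beta ^+ 2 + beta) by ring.
  by rewrite oppL.
have zq : z ^+ q = z + v by rewrite /z frobD exprMn hu hv hbq; ring.
set z' := z + v.
have z'0 : z' != 0 by rewrite /z' -zq expf_neq0.
have zpow : z ^+ (q - 1) = z' / z by rewrite /z' -zq pow_qm1 mulfK.
have wq : (z' / z - c) ^+ q = z / z' - c.
  rewrite !oppL frobD expr_div_n hc /z' -zq -exprM hqq.
  by [].
have hG : Gm c z = (z / z' - c) * (z' / z - c).
  by rewrite /Gm zpow exprD wq expr1.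
have hN : z * z' = u ^+ 2 + u * v + v ^+ 2 * a.
  have -> : z * z' = u ^+ 2 + u * v + v ^+ 2 * a + (u * v * beta) *+ 2.
    by rewrite /z' /z ha; ring.
  by rewrite two_kill addr0.
have NZ : z * z' != 0 by rewrite mulf_neq0.
have hGN : Gm c z * (z * z') = (c ^+ 2 + 1) * (z * z') + c * v ^+ 2.
  have -> : Gm c z * (z * z') = (c ^+ 2 + 1) * (z * z') + c * v ^+ 2
              - (c * (z ^+ 2 + z * v + v ^+ 2)) *+ 2.
    rewrite hG /z'; field.
    by apply/andP; split.
  by rewrite two_kill subr0.
rewrite /gfun -hN -(mulfK NZ (Gm c z)) hGN; field.
by rewrite z'0 nz.
Qed.

Lemma iter_mul (g y : L) i : iter i (fun x => g * x) y = g ^+ i * y.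
Proof. by elim: i => [|i IH] /=; rewrite ?expr0 ?mul1r // IH exprS mulrA. Qed.

Lemma mord_spec (g : L) : g != 0 ->
  [/\ (0 < mord g)%N, g ^+ mord g = 1
    & forall i, (0 < i < mord g)%N -> g ^+ i != 1].
Proof.
move=> nz; have inj : injective (fun x : L => g * x) by apply: mulfI.
split; first exact: fingraph.order_gt0.
  by have := fingraph.iter_order inj 1; rewrite iter_mul mulr1.
move=> i /andP [i0 ilt]; apply/negP => /eqP e.
have u := fingraph.orbit_uniq (fun x : L => g * x) 1.
have hs : size (fingraph.orbit (fun x : L => g * x) 1) = mord g by rewrite size_traject.
have := @nth_uniq _ 1 (fingraph.orbit (fun x : L => g * x) 1) 0 i.
rewrite hs fingraph.order_gt0 ilt => /(_ isT isT u).
rewrite /fingraph.orbit !nth_traject ?fingraph.order_gt0 // /= iter_mul e mulr1 eqxx.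
by move/esym/eqP => e0; move: i0; rewrite -e0.
Qed.

Lemma inFqE (x : L) : (x \in Fq) = (x ^+ q == x).
Proof. by rewrite unfold_in. Qed.

Lemma FqM (x y : L) : x ^+ q = x -> y ^+ q = y -> (x * y) ^+ q = x * y.
Proof. by move=> hx hy; rewrite exprMn hx hy. Qed.

Lemma FqV (x : L) : x ^+ q = x -> x^-1 ^+ q = x^-1.
Proof. by move=> hx; rewrite exprVn hx. Qed.

Lemma Fq_nz_unit (x : L) : x ^+ q = x -> x != 0 -> x ^+ (q - 1) = 1.
Proof. exact: Fq_unit. Qed.

Variables (a beta : L) (htr : absTr k a = 1) (hbeta : beta ^+ 2 + beta + a = 0).

Lemma beta_q : beta ^+ q = beta + 1.
Proof. by rewrite (beta_pow hbeta) -htr. Qed.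

Lemma beta_notFq : beta ^+ q != beta.
Proof.
rewrite beta_q; apply/eqP => /eqP; rewrite -subr_eq0 addrC addKr.
by rewrite oner_eq0.
Qed.

Lemma zr_nz (u v : L) : u ^+ q = u -> v ^+ q = v -> (u, v) != (0, 0) -> u + v * beta != 0.
Proof.
move=> hu hv nz; apply/eqP => e.
have [v0|vn] := eqVneq v 0.
  by move: e nz; rewrite v0 mul0r addr0 => ->; rewrite eqxx.
have hb : beta = u / v.
  apply: (mulfI vn); rewrite mulrC mulrCA divff // mulr1.
  by move/eqP: e; rewrite addr_eq0 oppL => /eqP ->; rewrite mulrC.
by move: beta_notFq; rewrite hb FqM ?FqV // eqxx.
Qed.

Lemma lineP (u v x : L) :
  reflect (exists2 l, l ^+ q = l & x = l * (u + v * beta)) (lineset q beta u v x).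
Proof.
apply: (iffP existsP) => [[l /andP [hl /eqP ->]]|[l hl ->]].
  by exists l => //; apply/eqP; rewrite -inFqE.
by exists l; rewrite inFqE hl !eqxx.
Qed.

Lemma line10 (x : L) : lineset q beta 1 0 x = (x ^+ q == x).
Proof.
apply/lineP/eqP => [[l hl ->]|hx]; first by rewrite mul0r addr0 mulr1.
by exists x => //; rewrite mul0r addr0 mulr1.
Qed.

Definition Fc (c : L) := fun x : L => x * (x ^+ (q - 1) - c) ^+ (q + 1).
Definition Dr (r : L * L) : pred L := [pred x | lineset q beta r.1 r.2 x && (x != 0)].

Lemma Dr_card u v : u ^+ q = u -> v ^+ q = v -> (u, v) != (0, 0) ->
  #|Dr (u, v)| = (q - 1)%N.
Proof.
move=> hu hv nzuv; have nz := zr_nz hu hv nzuv.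
transitivity #|[set l * (u + v * beta) | l in [pred x | (x \in Fq) && (x != 0)]]|.
  2: by rewrite card_imset ?card_Fq0 //; apply: mulIf.
apply: eq_card => x; rewrite /Dr !inE /=; apply/andP/imsetP.
  move=> [/lineP [l hl ->] xn]; exists l => //.
  by rewrite !inE inFqE hl eqxx /=; apply: contraNneq xn => ->; rewrite mul0r.
move=> [l]; rewrite !inE inFqE => /andP [/eqP hl ln] ->; split.
  by apply/lineP; exists l.
by rewrite mulf_neq0.
Qed.

Lemma Dr_iso c u v : u ^+ q = u -> v ^+ q = v -> (u, v) != (0, 0) -> c ^+ q = c ->
  Gm c (u + v * beta) != 0 ->
  iso_on (Fc c) (Dr (u, v))
    (copies_cycle ((q - 1) %/ mord (gfun a c u v)) (mord (gfun a c u v))).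
Proof.
move=> hu hv nzuv hc gn0; have nz := zr_nz hu hv nzuv.
rewrite -(Gm_gfun hbeta beta_q hu hv hc nz) -(Dr_card hu hv nzuv).
set z := u + v * beta in gn0 *; set g := Gm c z in gn0 *.
have gq : g ^+ q = g by apply: Gm_Fq.
have Fx x : x \in Dr (u, v) -> Fc c x = g * x.
  rewrite /Dr !inE /= => /andP [/lineP [l hl ->] xn].
  have ln : l != 0 by apply: contraNneq xn => ->; rewrite mul0r.
  by rewrite /Fc -/(Gm c (l * z)) Gm_scale // mulrC.
have cl x : x \in Dr (u, v) -> Fc c x \in Dr (u, v).
  move=> hx; rewrite Fx //; move: hx; rewrite /Dr !inE /= => /andP [/lineP [l hl ->] xn].
  rewrite mulf_neq0 // andbT; apply/lineP; exists (g * l); first by rewrite FqM.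
  by rewrite mulrA.
have it i x : x \in Dr (u, v) -> iter i (Fc c) x = g ^+ i * x.
  move=> hx; elim: i => [|i IH] /=; first by rewrite expr0 mul1r.
  by rewrite Fx ?IH ?exprS ?mulrA // -IH; apply: iter_closed.
have [d0 gd gp] := mord_spec gn0.
have hd x : x \in Dr (u, v) -> iter (mord g) (Fc c) x = x.
  by move=> hx; rewrite it // gd mul1r.
have hp x i : x \in Dr (u, v) -> (0 < i < mord g)%N -> iter i (Fc c) x != x.
  move=> hx hi; rewrite it //; apply/negP => /eqP e.
  have xn : x != 0 by move: hx; rewrite /Dr inE => /andP [].
  by move: (gp _ hi); rewrite -(inj_eq (mulIf xn)) /= mul1r e eqxx.
by have [_ iso] := iso_on_cycles d0 cl hd hp.
Qed.

Variables (reps : seq (L * L)) (hreps : P1_reps q beta reps).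

Lemma reps_Fq r : r \in reps -> [/\ r.1 ^+ q = r.1, r.2 ^+ q = r.2 & r != (0, 0)].
Proof.
move=> hr; have [h1 h2 h3] := hreps.1 r hr.
by split => //; apply/eqP; rewrite -inFqE.
Qed.

Lemma rest_iso c (P : pred (L * L)) : c ^+ q = c ->
  (forall r, r \in reps -> P r -> Gm c (r.1 + r.2 * beta) != 0) ->
  iso_on (Fc c) [pred x | has (fun r => x \in Dr r) [seq r <- reps | P r]]
   (flatten [seq copies_cycle ((q - 1) %/ mord (gfun a c r.1 r.2)) (mord (gfun a c r.1 r.2))
            | r <- reps & P r]).
Proof.
move=> hc hG.
apply: (iso_on_flatten (D := Dr)
   (s := fun r => copies_cycle ((q - 1) %/ mord (gfun a c r.1 r.2)) (mord (gfun a c r.1 r.2)))).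
  move=> [u v]; rewrite mem_filter => /andP [hP hr].
  have [hu hv nz] := reps_Fq hr.
  by apply: Dr_iso => //; apply: (hG _ hr).
move=> x; rewrite count_filter.
have [->|xn] := eqVneq x 0.
  rewrite (@eq_count _ _ pred0) ?count_pred0 // => r.
  by rewrite /= /Dr !inE eqxx andbF.
rewrite -(hreps.2 x xn); apply: sub_count => r /=.
by rewrite /Dr !inE => /andP [/andP [-> _] _].
Qed.

Lemma main_gen c : c ^+ q = c -> c != 0 -> c != 1 ->
  fgraph_iso (Fc c)
    ((1%N, 0%N) :: flatten [seq copies_cycle ((q - 1) %/ mord (gfun a c r.1 r.2))
                                             (mord (gfun a c r.1 r.2)) | r <- reps]).
Proof.
move=> hc c0 c1.
have hG : forall r, r \in reps -> predT r -> Gm c (r.1 + r.2 * beta) != 0.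
  move=> r hr _; have [hu hv nz] := reps_Fq hr.
  apply/eqP => /(Gm_eq0 hc (zr_nz hu hv nz)) [e _].
  by rewrite e eqxx in c1.
have R := rest_iso hc hG.
rewrite filter_predT in R.
have T0 : iso_on (Fc c) (pred1 0) [:: (1%N, 0%N)].
  apply: (iso_on_tree (z := 0)); first by rewrite inE.
    by move=> y; rewrite inE => /eqP ->; rewrite /Fc mul0r.
  by rewrite card1.
have dis : forall x, x \in pred1 0 ->
    x \in [pred x | has (fun r => x \in Dr r) reps] -> False.
  move=> x; rewrite !inE => /eqP -> /hasP [r _]; rewrite /Dr !inE eqxx andbF.
  by [].
have U := iso_on_cat dis T0 R.
apply: iso_on_fgraph; apply: iso_on_eq U => x.
rewrite !inE; have [->|xn] := eqVneq x 0; first by [].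
rewrite /= has_count.
suff -> : count (fun r => x \in Dr r) reps = 1%N by [].
rewrite -(hreps.2 x xn); apply: eq_count => r /=.
by rewrite /Dr !inE xn andbT.
Qed.

Lemma line_eq10 (u v : L) : (u + v * beta) ^+ q = u + v * beta -> u + v * beta != 0 ->
  [forall z, lineset q beta u v z == lineset q beta 1 0 z].
Proof.
move=> hz nz; apply/forallP => z; rewrite line10; apply/eqP; apply/idP/idP.
  move=> /lineP [l hl ->]; by rewrite FqM.
move=> /eqP hzq; apply/lineP; exists (z / (u + v * beta)); last by rewrite divfK.
by rewrite FqM ?FqV.
Qed.

Lemma Dr_Fq (u v x : L) : x \in Dr (u, v) -> x ^+ q = x -> (u + v * beta) ^+ q = u + v * beta.
Proof.
rewrite /Dr !inE /= => /andP [/lineP [l hl ->] xn] hx.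
have ln : l != 0 by apply: contraNneq xn => ->; rewrite mul0r.
have -> : u + v * beta = l^-1 * (l * (u + v * beta)) by rewrite mulKf.
by rewrite FqM ?FqV.
Qed.

Definition not10 (r : L * L) :=
  ~~ [forall z : L, lineset q beta r.1 r.2 z == lineset q beta 1 0 z].

Lemma main_one :
  fgraph_iso (Fc 1)
    ((1%N, (q - 1)%N) ::
       flatten [seq copies_cycle ((q - 1) %/ mord (gfun a 1 r.1 r.2))
                                 (mord (gfun a 1 r.1 r.2))
               | r <- reps & not10 r]).
Proof.
have notFq r : r \in reps -> not10 r -> (r.1 + r.2 * beta) ^+ q != r.1 + r.2 * beta.
  move=> hr hP; apply/negP => /eqP hz; move: hP; rewrite /not10 line_eq10 //.
  by have [hu hv nz] := reps_Fq hr; apply: zr_nz.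
have hG : forall r, r \in reps -> not10 r -> Gm 1 (r.1 + r.2 * beta) != 0.
  move=> r hr hP; have [hu hv nz] := reps_Fq hr.
  apply/eqP => /(Gm_eq0 (expr1n _ _) (zr_nz hu hv nz)) [_ e].
  by move: (notFq r hr hP); rewrite e eqxx.
have R := rest_iso (expr1n _ _) hG.
have T0 : iso_on (Fc 1) Fq [:: (1%N, (q - 1)%N)].
  apply: (iso_on_tree (z := 0)).
  - by rewrite inFqE expr0n expn_eq0 /=.
  - move=> y; rewrite inFqE => /eqP hy; rewrite /Fc.
    have [->|yn] := eqVneq y 0; first by rewrite mul0r.
    by rewrite Fq_unit // subrr expr0n addn1 /= mulr0.
  - by rewrite card_Fq subn1 prednK // expn_gt0.
have dis : forall x, x \in Fq ->
    x \in [pred x | has (fun r => x \in Dr r) [seq r <- reps | not10 r]] -> False.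
  move=> x hx; rewrite inE => /hasP [[u v]]; rewrite mem_filter => /andP [hP hr] hD.
  have := notFq _ hr hP; rewrite /= (Dr_Fq hD) ?eqxx //.
  by apply/eqP; rewrite -inFqE.
have U := iso_on_cat dis T0 R.
apply: iso_on_fgraph; apply: iso_on_eq U => x.
rewrite !inE; case: (boolP (x \in Fq)) => hx //=.
have xn : x != 0 by apply: contraNneq hx => ->; rewrite inFqE expr0n expn_eq0.
have hc1 := hreps.2 x xn.
have : has (fun r => lineset q beta r.1 r.2 x) reps by rewrite has_count hc1.
move=> /hasP [r hr hl].
apply/hasP; exists r; last by rewrite /Dr !inE hl xn.
rewrite mem_filter hr andbT /not10; apply/negP => /forallP /(_ x) /eqP.
by rewrite hl line10 => /esym; rewrite -inFqE (negbTE hx).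
Qed.

End Fld.

Theorem mainTheorem10 (L : finFieldType) (k : nat) (hk : (0 < k)%N)
  (hcard : #|L| = ((2 ^ k) ^ 2)%N) (a beta : L)
  (ha : a \in subFq (2 ^ k)) (htr : absTr k a = 1)
  (hbeta : beta ^+ 2 + beta + a = 0)
  (reps : seq (L * L)) (hreps : P1_reps (2 ^ k) beta reps) :
  let q := (2 ^ k)%N in
  let f := fun c : L => fun x : L => x * (x ^+ (q - 1) - c) ^+ (q + 1) in
  (forall c : L, c \in subFq q -> c != 0 -> c != 1 ->
     fgraph_iso (f c)
       ((1%N, 0%N) :: flatten [seq copies_cycle ((q - 1) %/ mord (gfun a c r.1 r.2))
                                              (mord (gfun a c r.1 r.2)) | r <- reps]))
  /\
  fgraph_iso (f 1)
    ((1%N, (q - 1)%N) ::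
       flatten [seq copies_cycle ((q - 1) %/ mord (gfun a 1 r.1 r.2))
                                 (mord (gfun a 1 r.1 r.2))
               | r <- reps & ~~ [forall z : L, lineset q beta r.1 r.2 z == lineset q beta 1 0 z]]).
Proof.
move=> q f; split.
  move=> c hc c0 c1.
  exact: (main_gen hk hcard htr hbeta hreps (eqP hc) c0 c1).
exact: (main_one hk hcard htr hbeta hreps).
Qed.
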